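(* Let $X$ be a finite quandle with connected components $C_1,\dots,C_k$, let $s=(x_1,\dots,x_n)\in X^n$, let $D_j=\{1\le i\le n:x_i\in C_j\}$ and $n_j=|D_j|$, and suppose $n_j>\max_{1\le r\le k}|C_r|$ for every $1\le j\le k$. Then the image in $S_{n_1}\times\dots\times S_{n_k}$ of the stabilizer of $s$ in $B_{n_1,\dots,n_k}$ surjects onto $(\mathbb Z/2\mathbb Z)^k$ under the sign homomorphisms.
   Context: A quandle is a set $X$ with an operation $x^y$ such that $x\mapsto x^y$ is bijective for each $y$, $(z^x)^y=(z^y)^{x^y}$ and $x^x=x$; its connected components are the classes of the smallest equivalence relation with $x\sim x^y$. $B_n$ acts on $X^n$ from the right by $(\dots,x_i,x_{i+1},\dots)^{\sigma_i}=(\dots,x_{i+1},x_i^{x_{i+1}},\dots)$, and $B_n\to S_n$ sends $\sigma_i\mapsto(i\ i+1)$. $S_{n_1}\times\dots\times S_{n_k}$ is identified with $\{\sigma\in S_n:\sigma(D_j)=D_j\ \forall j\}$, and $B_{n_1,\dots,n_k}$ is its preimage in $B_n$. The sign homomorphisms are the signs of the restrictions to each $D_j$. *)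

(* Defs.v *)
From mathcomp Require Import all_boot all_fingroup.
Set Implicit Arguments. Unset Strict Implicit. Unset Printing Implicit Defensive.

(* Quandles: x ^ y is written  op x y. *)
Definition is_quandle (X : Type) (op : X -> X -> X) : Prop :=
  [/\ forall y, bijective (fun x => op x y),
      forall x y z, op (op z x) y = op (op z y) (op x y)
    & forall x, op x x = x].

(* generating relation x ~ x^y (symmetrised); its reflexive-transitive closure
   [connect] is the smallest equivalence relation containing x ~ x^y *)
Definition qrel (X : finType) (op : X -> X -> X) : rel X :=
  fun x z => [exists y, op x y == z] || [exists y, op z y == x].

Definition qcomp (X : finType) (op : X -> X -> X) (x : X) : {set X} :=
  [set z | connect (qrel op) x z].

Definition qinv (X : finType) (op : X -> X -> X) (x y : X) : X :=
  odflt x [pick z | op z y == x].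

(* positions i and i+1 (0-indexed) of the generator sigma_{i+1}, i : 'I_n.-1 *)
Lemma gen_lo_proof n (i : 'I_n.-1) : (i : nat) < n.
Proof. by have := ltn_ord i; case: n i => //= n i /ltnW. Qed.
Lemma gen_hi_proof n (i : 'I_n.-1) : (i : nat).+1 < n.
Proof. by have := ltn_ord i; case: n i. Qed.
Definition gen_lo n (i : 'I_n.-1) : 'I_n := Ordinal (gen_lo_proof i).
Definition gen_hi n (i : 'I_n.-1) : 'I_n := Ordinal (gen_hi_proof i).

(* A braid word: sequence of generators sigma_{i+1}^{+1} (b = true) or
   sigma_{i+1}^{-1} (b = false).  Every element of B_n is represented by one. *)
Definition braid_word n := seq ('I_n.-1 * bool).

Definition act_gen (X : finType) (op : X -> X -> X) n
    (s : {ffun 'I_n -> X}) (g : 'I_n.-1 * bool) : {ffun 'I_n -> X} :=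
  let: (i, b) := g in
  let a := s (gen_lo i) in let c := s (gen_hi i) in
  [ffun p => if p == gen_lo i then (if b then c else qinv op c a)
             else if p == gen_hi i then (if b then op a c else a)
             else s p].

Fixpoint act_word (X : finType) (op : X -> X -> X) n
    (s : {ffun 'I_n -> X}) (w : braid_word n) : {ffun 'I_n -> X} :=
  if w is g :: w' then act_word op (act_gen op s g) w' else s.

Fixpoint braid_perm n (w : braid_word n) : {perm 'I_n} :=
  if w is g :: w' then (tperm (gen_lo g.1) (gen_hi g.1) * braid_perm w')%g
  else 1%g.

(* Main.v *)
Require Import Defs.
From mathcomp Require Import all_boot all_fingroup.
Set Implicit Arguments. Unset Strict Implicit. Unset Printing Implicit Defensive.

Section S.
Variables (X : finType) (op : X -> X -> X).
Hypothesis Hq : is_quandle op.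

Lemma act_word_cat n (s : {ffun 'I_n -> X}) w1 w2 :
  act_word op s (w1 ++ w2) = act_word op (act_word op s w1) w2.
Proof. by elim: w1 s => //= g w IH s. Qed.

Lemma braid_perm_cat n (w1 w2 : braid_word n) :
  braid_perm (w1 ++ w2) = (braid_perm w1 * braid_perm w2)%g.
Proof. by elim: w1 => /= [|g w IH]; rewrite ?mul1g // IH mulgA. Qed.

Lemma qinvK a c : qinv op (op a c) c = a.
Proof.
case: Hq => bij _ _; have inj := bij_inj (bij c).
rewrite /qinv; case: pickP => [z /eqP /inj -> //|/(_ a)]; by rewrite eqxx.
Qed.

Lemma act_gen_inv n (s : {ffun 'I_n -> X}) i :
  act_gen op (act_gen op s (i, true)) (i, false) = s.
Proof.
apply/ffunP => p; rewrite /= !ffunE.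
have nlh : gen_lo i != gen_hi i.
  by apply/eqP => /(congr1 val) /= /eqP; rewrite eqn_leq ltnn andbF.
have nhl : gen_hi i != gen_lo i by rewrite eq_sym.
rewrite (negbTE nhl) !eqxx qinvK.
by case: eqP => [->|_] //; case: eqP => [->|_].
Qed.

Lemma swap_word n d : forall (s : {ffun 'I_n -> X}) (a b : 'I_n),
  val b = a + d.+1 -> s a = s b ->
  exists w : braid_word n, act_word op s w = s /\ braid_perm w = tperm a b.
Proof.
case: Hq => _ _ idem.
elim: d => [|d IH] s a b Hb Hs.
- have Hi : (a : nat) < n.-1 by have := ltn_ord b; rewrite Hb addn1 => h; rewrite -ltnS (ltn_predK h).
  pose i : 'I_n.-1 := Ordinal Hi.
  have El : gen_lo i = a by apply: val_inj.
  have Eh : gen_hi i = b by apply: val_inj => /=; rewrite Hb addn1.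
  exists [:: (i, true)]; split; last by rewrite /= mulg1 El Eh.
  apply/ffunP => p; rewrite /= ffunE El Eh -Hs idem.
  by case: eqP => [->|_] //; case: eqP => [->|_].
- have Hc : a + d.+1 < n by have := ltn_ord b; rewrite Hb addnS; apply: ltnW.
  pose c : 'I_n := Ordinal Hc.
  have Hi : (c : nat) < n.-1 by have := ltn_ord b; rewrite Hb /= addnS => h; rewrite -ltnS (ltn_predK h).
  pose i : 'I_n.-1 := Ordinal Hi.
  have El : gen_lo i = c by apply: val_inj.
  have Eh : gen_hi i = b by apply: val_inj => /=; rewrite Hb !addnS.
  have nac : a != c by rewrite -val_eqE /= -{1}(addn0 a) eqn_add2l.
  have nab : a != b by rewrite -val_eqE /= Hb -{1}(addn0 a) eqn_add2l.
  pose s' := act_gen op s (i, true).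
  have Hs' : s' a = s' c by rewrite /s' /= !ffunE El Eh eqxx (negbTE nac) (negbTE nab).
  have [w' [Hw' Pw']] := IH s' a c erefl Hs'.
  exists ((i, true) :: w' ++ [:: (i, false)]); split.
    by rewrite /= act_word_cat -/s' Hw'; exact: act_gen_inv.
  rewrite /= braid_perm_cat Pw' /= mulg1 El Eh.
  have -> : (tperm c b * (tperm a c * tperm c b) = (tperm a c) ^ (tperm c b))%g.
    by rewrite /conjg tpermV mulgA.
  by rewrite tpermJ tpermL tpermD // eq_sym.
Qed.
End S.

Lemma qrel_sym (X : finType) (op : X -> X -> X) : symmetric (qrel op).
Proof. by move=> x z; rewrite /qrel orbC. Qed.

Lemma N_imset (T : finType) (D : {set T}) (p : {perm T}) :
  p \in ('N(D | 'P))%g -> p @: D = D.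
Proof.
move/astabsP => H; apply/setP => y; apply/imsetP/idP => [[x xD ->]|yD].
  by have := H x; rewrite /= /aperm xD.
exists (p^-1 y)%g; last by rewrite permKV.
by rewrite -(H (p^-1 y)%g) /= /aperm permKV.
Qed.

Section Main.
Variables (X : finType) (op : X -> X -> X) (k n : nat)
    (C : 'I_k -> {set X}) (s : {ffun 'I_n -> X}).
Hypotheses (Hq : is_quandle op) (Hinj : injective C)
  (Himg : [set C j | j : 'I_k] = [set qcomp op x | x : X])
  (Hcard : forall j r : 'I_k, #|C r| < #|[set i : 'I_n | s i \in C j]|).
Let D j := [set i : 'I_n | s i \in C j].

Lemma comp_uniq j j' x : x \in C j -> x \in C j' -> j = j'.
Proof.
have csym := sym_connect_sym (qrel_sym op).
have get : forall j, exists y, C j = qcomp op y.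
  move=> j0; have : C j0 \in [set C j | j : 'I_k] by apply: imset_f.
  by rewrite Himg => /imsetP [y _ ->]; exists y.
have key : forall y, x \in qcomp op y -> qcomp op y = qcomp op x.
  move=> y; rewrite inE => cyx; apply/setP => z; rewrite !inE.
  by rewrite (same_connect csym cyx).
have [y Ey] := get j; have [y' Ey'] := get j'.
rewrite Ey Ey' => /key H1 /key H2; apply: Hinj; by rewrite Ey Ey' H1 H2.
Qed.

Lemma pair_exists j : exists a b, [/\ a != b, s a = s b & s a \in C j].
Proof.
case: (boolP [forall a in D j, forall b in D j, (s a == s b) ==> (a == b)]).
  move/forallP => H; exfalso.
  have inj : {in D j &, injective s}.
    by move=> a b aD bD /eqP; have := H a; rewrite aD /= => /forall_inP /(_ b bD) /implyP Hi /Hi /eqP.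
  have sub : s @: D j \subset C j by apply/subsetP => y /imsetP [x]; rewrite inE => xC ->.
  have := subset_leq_card sub; rewrite card_in_imset // leqNgt.
  by rewrite (Hcard j j).
move/forallPn => [a]; rewrite negb_imply => /andP [aD /forallPn [b]].
rewrite negb_imply => /andP [bD]; rewrite negb_imply => /andP [/eqP sab nab].
exists a, b; split => //; by move: aD; rewrite inE.
Qed.

Lemma swap_any (a b : 'I_n) : a != b -> s a = s b ->
  exists w : braid_word n, act_word op s w = s /\ braid_perm w = tperm a b.
Proof.
move=> nab sab; case: (ltngtP a b) => H.
- apply: (swap_word Hq (d := b - a.+1)) => //.
  by rewrite addnS -addSn subnKC.
- have [w [Hw Pw]] := swap_word Hq (d := a - b.+1) (s := s) (a := b) (b := a)
    (esym (etrans (addnS _ _) (etrans (esym (addSn _ _)) (subnKC H)))) (esym sab).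
  by exists w; rewrite tpermC.
- by case/negP: nab; apply/eqP/val_inj.
Qed.

Lemma tperm_N a b j : s a = s b -> tperm a b \in ('N(D j | 'P))%g.
Proof.
move=> sab; apply/astabsP => x; rewrite /= /aperm.
by case: tpermP => [->|->|//]; rewrite !inE sab.
Qed.

Lemma odd_restr a b j j' : a != b -> s a = s b -> s a \in C j ->
  odd_perm (restr_perm (D j') (tperm a b)) = (j == j').
Proof.
move=> nab sab saC; have tN := tperm_N j' sab.
case: eqP => [E|njj].
  subst j'.
  have -> : restr_perm (D j) (tperm a b) = tperm a b.
    apply/permP => x; case: (boolP (x \in D j)) => xD; first by rewrite restr_permE.
    rewrite (out_perm (restr_perm_on _ _)) //.
    case: tpermP => // E; move: xD; by rewrite E inE -?sab saC.
  by rewrite odd_tperm.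
have saC' : s a \notin C j' by apply/negP => /(comp_uniq saC) /njj.
have -> : restr_perm (D j') (tperm a b) = 1%g.
  apply/permP => x; rewrite perm1; case: (boolP (x \in D j')) => xD.
    rewrite restr_permE //; case: tpermP => // E; move: xD; by rewrite E inE -?sab (negbTE saC').
  by rewrite (out_perm (restr_perm_on _ _)).
by rewrite odd_perm1.
Qed.

Lemma list_word (L : seq 'I_k) : uniq L -> exists w : braid_word n,
  [/\ act_word op s w = s, forall j, braid_perm w \in ('N(D j | 'P))%g
    & forall j, odd_perm (restr_perm (D j) (braid_perm w)) = (j \in L)].
Proof.
elim: L => [_|j L IH /= /andP [jL uL]].
  exists [::]; split => //= j.
  by rewrite morph1 odd_perm1.
have [w [Hw Nw Ow]] := IH uL.
have [a [b [nab sab saC]]] := pair_exists j.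
have [w0 [Hw0 Pw0]] := swap_any nab sab.
exists (w0 ++ w); split.
- by rewrite act_word_cat Hw0 Hw.
- by move=> j'; rewrite braid_perm_cat Pw0 groupM ?Nw ?(tperm_N _ sab).
- move=> j'; rewrite braid_perm_cat Pw0 morphM ?Nw ?(tperm_N _ sab) // odd_permM Ow.
  rewrite (odd_restr j' nab sab saC) in_cons eq_sym.
  by case: eqP => [->|_] //=; rewrite (negbTE jL).
Qed.
End Main.

Theorem proposition4p35 (X : finType) (op : X -> X -> X) (k n : nat)
    (C : 'I_k -> {set X}) (s : {ffun 'I_n -> X}) :
  is_quandle op ->
  injective C ->
  [set C j | j : 'I_k] = [set qcomp op x | x : X] ->
  (forall j r : 'I_k, #|C r| < #|[set i : 'I_n | s i \in C j]|) ->
  forall e : 'I_k -> bool,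
  exists w : braid_word n,
    [/\ act_word op s w = s,
        forall j : 'I_k, braid_perm w @: [set i : 'I_n | s i \in C j]
                         = [set i : 'I_n | s i \in C j]
      & forall j : 'I_k,
          odd_perm (restr_perm [set i : 'I_n | s i \in C j] (braid_perm w))
          = e j].
Proof.
move=> Hq Hinj Himg Hcard e.
have uL : uniq [seq j <- enum 'I_k | e j] by rewrite filter_uniq ?enum_uniq.
have [w [Hw Nw Ow]] := list_word Hq Hinj Himg Hcard uL.
exists w; split => // j; first exact: N_imset.
by rewrite Ow mem_filter mem_enum andbT.
Qed.
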